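(* For every $n\ge1$ and every $A\subseteq[n]$, the set-alternating domain $D_X(A)$ is connected: for any two orders in $D_X(A)$, the second can be obtained from the first by a sequence of transpositions of adjacent alternatives such that every intermediate order lies in $D_X(A)$.
   Context: Alternatives are $X=[n]$, with societal axis $1<\dots<n$; linear orders are written as strings, leftmost ranked highest. For $A\subseteq[n]$, $D_X(A)$ is the set of all linear orders $q$ on $[n]$ such that for every triple $i<j<k$: if $j\in A$ then $i$ is not ranked last among $\{i,j,k\}$ in $q$, and if $j\notin A$ then $k$ is not ranked first among $\{i,j,k\}$ in $q$. *)

(* Defs.v *)
From mathcomp Require Import all_boot.
Set Implicit Arguments. Unset Strict Implicit. Unset Printing Implicit Defensive.

(* Alternatives are the naturals 1..n; a linear order on [n] is a sequence
   q (leftmost = ranked highest) which is a permutation of [:: 1; ...; n]. *)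
Definition linear_order (n : nat) (q : seq nat) : bool := perm_eq q (iota 1 n).

Definition above (q : seq nat) (x y : nat) : bool := index x q < index y q.

Definition ranked_last (q : seq nat) (x y z : nat) : bool :=
  above q y x && above q z x.
Definition ranked_first (q : seq nat) (x y z : nat) : bool :=
  above q x y && above q x z.

Definition in_DX (n : nat) (A : pred nat) (q : seq nat) : Prop :=
  linear_order n q /\
  forall i j k, 1 <= i -> i < j -> j < k -> k <= n ->
    (A j -> ~~ ranked_last q i j k) /\ (~~ A j -> ~~ ranked_first q k i j).

Definition swap_adj (q : seq nat) (m : nat) : seq nat :=
  take m q ++ [:: nth 0 q m.+1; nth 0 q m] ++ drop m.+2 q.

Definition adj_step (q q' : seq nat) : bool :=
  has (fun m => q' == swap_adj q m) (iota 0 (size q).-1).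

Definition connected_domain (D : seq nat -> Prop) : Prop :=
  forall q1 q2, D q1 -> D q2 ->
    exists p : seq (seq nat),
      [/\ path adj_step q1 p, last q1 p = q2 & forall q, q \in p -> D q].

(* Main.v *)
Require Import Defs.
From mathcomp Require Import all_boot.
From mathcomp Require Import zify.

Lemma swap_cons x q m : swap_adj (x :: q) m.+1 = x :: swap_adj q m.
Proof. by []. Qed.

Lemma swap0 c d r : swap_adj [:: c, d & r] 0 = [:: d, c & r].
Proof. by rewrite /swap_adj /= drop0. Qed.

Lemma size_swap q m : m.+1 < size q -> size (swap_adj q m) = size q.
Proof.
elim: q m => [|x q IH] [|m] //.
  by case: q {IH} => [|y r] // _; rewrite swap0.
by move=> h; rewrite swap_cons /= IH.
Qed.

Lemma swap_invol q m : m.+1 < size q -> swap_adj (swap_adj q m) m = q.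
Proof.
elim: q m => [|x q IH] [|m] //.
  by case: q {IH} => [|y r] // _; rewrite !swap0.
by move=> h; rewrite !swap_cons IH.
Qed.

Lemma perm_swap q m : m.+1 < size q -> perm_eq (swap_adj q m) q.
Proof.
elim: q m => [|x q IH] [|m] //.
  case: q {IH} => [|y r] // _; rewrite swap0.
  by apply/permP => p /=; rewrite addnCA.
by move=> h; rewrite swap_cons perm_cons IH.
Qed.

Lemma above_swap q m x y : m.+1 < size q -> above (swap_adj q m) x y ->
  above q x y \/ (x = nth 0 q m.+1 /\ y = nth 0 q m).
Proof.
elim: q m => [|z q IH] [|m] //.
  case: q {IH} => [|d r] // _; rewrite swap0.
  rewrite /above /=.
  by repeat (case: ifP => /eqP ?; subst); try congruence; move=> h; try (by right); left; lia.
move=> h; rewrite swap_cons.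
move: (IH m); rewrite /above /= => {}IH.
by repeat (case: ifP => /eqP ?; subst); try congruence; move=> H; try (case: (IH h H) => ?; [left; lia|right; done]); left; lia.
Qed.

Fixpoint phi k (s : seq nat) := if s is x :: s' then k * x + phi k.+1 s' else 0.

Lemma phi_swap q m k : m.+1 < size q ->
  phi k (swap_adj q m) + (k + m) * nth 0 q m + (k + m).+1 * nth 0 q m.+1
  = phi k q + (k + m) * nth 0 q m.+1 + (k + m).+1 * nth 0 q m.
Proof.
elim: q m k => [|x q IH] [|m] k //.
  case: q {IH} => [|y r] // _; rewrite swap0 /=; rewrite addn0; lia.
move=> h; rewrite swap_cons /=.
have := IH m k.+1 h. rewrite addSn -addnS. lia.
Qed.

Lemma phi_bound k q : phi k q <= (k + size q) * sumn q.
Proof.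
elim: q k => [|x q IH] k //=.
have := IH k.+1. nia.
Qed.

Section Main.
Variables (n : nat) (A : pred nat).

Lemma swap_DX q m : in_DX n A q -> m.+1 < size q -> nth 0 q m.+1 < nth 0 q m ->
  in_DX n A (swap_adj q m).
Proof.
move=> [Hl Hc] hm hd; split.
  by rewrite /linear_order (perm_trans (perm_swap q m hm)).
move=> i j k h1 h2 h3 h4; have [C1 C2] := Hc i j k h1 h2 h3 h4; split.
  move=> Aj; apply/negP => /andP[X Y].
  case: (above_swap _ _ _ _ hm X) => [X'|[e1 e2]]; last lia.
  case: (above_swap _ _ _ _ hm Y) => [Y'|[e1 e2]]; last lia.
  by move/negP: (C1 Aj); apply; rewrite /ranked_last X' Y'.
move=> Aj; apply/negP => /andP[X Y].
case: (above_swap _ _ _ _ hm X) => [X'|[e1 e2]]; last lia.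
case: (above_swap _ _ _ _ hm Y) => [Y'|[e1 e2]]; last lia.
by move/negP: (C2 Aj); apply; rewrite /ranked_first X' Y'.
Qed.

Lemma descent q : linear_order n q -> q <> iota 1 n ->
  exists m, m.+1 < size q /\ nth 0 q m.+1 < nth 0 q m.
Proof.
move=> Hl Hne.
case: (boolP (has (fun m => nth 0 q m.+1 < nth 0 q m) (iota 0 (size q).-1))).
  move/hasP=> [m]; rewrite mem_iota => /andP[_ hm] hd; exists m; split=> //; lia.
move/hasPn=> H; exfalso; apply: Hne.
apply: (sorted_eq leq_trans anti_leq) => //; last exact: iota_sorted.
case: q Hl H => [|x q] //= Hl H.
apply/(pathP 0) => i hi.
have := H i; rewrite mem_iota /= hi => /(_ isT); rewrite -leqNgt.
by case: i hi.
Qed.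

Definition B := n * sumn (iota 1 n).

Lemma phi_le q : linear_order n q -> phi 0 q <= B.
Proof.
move=> Hl; have := phi_bound 0 q.
by rewrite (perm_size Hl) size_iota (perm_sumn Hl).
Qed.

Lemma adj_swap q m : m.+1 < size q -> adj_step q (swap_adj q m).
Proof.
move=> hm; apply/hasP; exists m => //; rewrite mem_iota; lia.
Qed.

Lemma adj_sym q q' : adj_step q q' -> adj_step q' q.
Proof.
move/hasP=> [m]; rewrite mem_iota => /andP[_ hm] /eqP ->.
have hm' : m.+1 < size q by lia.
apply/hasP; exists m; first by rewrite mem_iota size_swap //; lia.
by rewrite swap_invol.
Qed.

Lemma to_id d q : in_DX n A q -> B - phi 0 q < d ->
  exists p, [/\ path adj_step q p, last q p = iota 1 n &
                forall r, r \in p -> in_DX n A r].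
Proof.
elim: d q => [|d IH] q Hq hd //.
case: (eqVneq q (iota 1 n)) => [->|Hne].
  by exists [::]; split.
have [m [hm hdes]] := descent q (proj1 Hq) (elimN eqP Hne).
set q' := swap_adj q m.
have Hq' : in_DX n A q' by exact: swap_DX.
have := phi_swap q m 0 hm; rewrite add0n => E.
have := phi_le q' (proj1 Hq'); rewrite -/q' => L.
have Hgt : phi 0 q < phi 0 q'.
  move: E; rewrite -/q' !mulSn; set a := nth 0 q m; set b := nth 0 q m.+1.
  move: hdes; rewrite -/a -/b; lia.
have [p [P1 P2 P3]] := IH q' Hq' ltac:(lia).
exists (q' :: p); split => /=.
- by rewrite (adj_swap q m hm).
- by [].
- by move=> r; rewrite inE => /orP[/eqP ->|]; auto.
Qed.

End Main.

Lemma last_rev_belast (T : Type) (x : T) s : last (last x s) (rev (belast x s)) = x.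
Proof.
have H : last x s :: rev (belast x s) = rcons (rev s) x.
  by rewrite -rev_rcons -lastI rev_cons.
by rewrite -(last_cons x) H last_rcons.
Qed.

Theorem proposition2 (n : nat) (A : pred nat) :
  1 <= n -> (forall x, A x -> 1 <= x <= n) ->
  connected_domain (in_DX n A).
Proof.
move=> _ _ q1 q2 H1 H2.
have [p1 [P1 L1 M1]] := to_id n A _ q1 H1 (ltnSn _).
have [p2 [P2 L2 M2]] := to_id n A _ q2 H2 (ltnSn _).
exists (p1 ++ rev (belast q2 p2)); split.
- rewrite cat_path P1 L1 /= -L2 rev_path.
  by apply: sub_path P2 => a b; apply: adj_sym.
- by rewrite last_cat L1 -L2 last_rev_belast.
- move=> r; rewrite mem_cat => /orP[/M1 //|].
  rewrite mem_rev => /mem_belast; rewrite inE => /orP[/eqP ->//|/M2 //].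
Qed.
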